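(* Let $\mathcal{O}$ be a unital JB-algebra satisfying the Strong Stone–Weierstrass property: for every Jordan subalgebra $B$ of $\mathcal{O}$, if $B$ separates $P(\mathcal{O})\cup\{0\}$, then $B=\mathcal{O}$. Let $\mathcal{C}\subset\mathcal{O}$ satisfy: (i) $\mathcal{C}$ separates the pure states of $\mathcal{O}$; (ii) for every $c\in\mathcal{C}$ and every continuous non-decreasing function $f:\mathbb{R}\to\mathbb{R}$, we have $f(c)\in\mathcal{C}$; (iii) $\mathcal{C}$ is norm closed; (iv) $c_1+c_2\in\mathcal{C}$ for all $c_1,c_2\in\mathcal{C}$. Then $\mathcal{C}$ separates the states of $\mathcal{O}$: for any two distinct states $s_1\neq s_2$ of $\mathcal{O}$ there exists $c\in\mathcal{C}$ with $s_1(c)\neq s_2(c)$.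
   Context: A JB-algebra is a real Jordan Banach algebra with the usual JB-norm axioms; it has continuous functional calculus $a\mapsto f(a)$ for each element $a$ and continuous real function $f$ on its spectrum. States are the normalized positive linear functionals, and $P(\mathcal{O})$ is the set of pure (extreme) states. A subset $B$ separates $P(\mathcal{O})\cup\{0\}$ if for any two distinct elements $\phi\neq\psi$ of $P(\mathcal{O})\cup\{0\}$ (where $0$ is the zero functional) there is $b\in B$ with $\phi(b)\neq\psi(b)$. *)

(* Defs.v *)
From HB Require Import structures.
From mathcomp Require Import all_boot all_order all_algebra.
From mathcomp Require Import all_classical all_reals all_analysis.
Set Implicit Arguments. Unset Strict Implicit. Unset Printing Implicit Defensive.
Import Order.TTheory GRing.Theory Num.Theory.
Import numFieldNormedType.Exports.
Local Open Scope classical_set_scope.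
Local Open Scope ring_scope.

Section JB.
Variables (R : realType) (V : completeNormedModType R).
Variables (jm : V -> V -> V) (e : V).

Definition unital_JB_algebra : Prop :=
  (forall (a : R) x y z, jm (a *: x + y) z = a *: jm x z + jm y z) /\
  (forall x y, jm x y = jm y x) /\
  (forall x y, jm (jm x y) (jm x x) = jm x (jm y (jm x x))) /\
  (forall x, jm e x = x) /\
  (forall x y, `|jm x y| <= `|x| * `|y|) /\
  (forall x, `|jm x x| = `|x| ^+ 2) /\
  (forall x y, `|jm x x| <= `|jm x x + jm y y|).

Fixpoint jpow (x : V) (n : nat) : V :=
  if n is n'.+1 then jm x (jpow x n') else e.

Definition jpeval (p : {poly R}) (x : V) : V :=
  \sum_(i < size p) p`_i *: jpow x i.

(* Continuous functional calculus: x = f(a) iff x is the limit of p_n(a)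
   for polynomials p_n converging uniformly to f on [-|a|, |a|]
   (an interval containing the spectrum of a). *)
Definition fcalc (a : V) (f : R -> R) (x : V) : Prop :=
  exists p : nat -> {poly R},
    (forall eps : R, 0 < eps -> \forall n \near \oo,
        forall t : R, `|t| <= `|a| -> `|(p n).[t] - f t| < eps) /\
    ((fun n => jpeval (p n) a) @ \oo --> x).

(* States: normalized positive linear functionals (positive = nonnegative
   on squares, i.e. on the positive cone). *)
Definition is_state (s : V -> R) : Prop :=
  [/\ (forall (a : R) x y, s (a *: x + y) = a * s x + s y),
      (forall x, 0 <= s (jm x x)) &
      s e = 1].

Definition is_pure_state (s : V -> R) : Prop :=
  is_state s /\
  forall (s1 s2 : V -> R) (t : R), is_state s1 -> is_state s2 ->
    0 < t < 1 -> (forall x, s x = t * s1 x + (1 - t) * s2 x) ->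
    (forall x, s1 x = s x) /\ (forall x, s2 x = s x).

Definition separates (B : set V) (S : set (V -> R)) : Prop :=
  forall phi psi, S phi -> S psi -> phi <> psi ->
    exists b, B b /\ phi b <> psi b.

Definition jordan_subalgebra (B : set V) : Prop :=
  [/\ B 0, (forall (a : R) x y, B x -> B y -> B (a *: x + y)),
      (forall x y, B x -> B y -> B (jm x y)) & closed B].

Definition strong_stone_weierstrass : Prop :=
  forall B : set V, jordan_subalgebra B ->
    separates B [set phi | is_pure_state phi \/ phi = (fun _ => 0)] ->
    B = setT.

End JB.

(* Main.v *)
Require Import Defs.
From HB Require Import structures.
From mathcomp Require Import all_boot all_order all_algebra.
From mathcomp Require Import all_classical all_reals all_analysis.
Import Order.TTheory GRing.Theory Num.Theory.
Import numFieldNormedType.Exports.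
Local Open Scope classical_set_scope.
Local Open Scope ring_scope.
From mathcomp Require Import ring lra.
Set Implicit Arguments.
Section Alg.
Variables (R : realType) (V : completeNormedModType R) (jm : V -> V -> V) (e : V).
Hypothesis H : unital_JB_algebra jm e.

Lemma jmlin a x y z : jm (a *: x + y) z = a *: jm x z + jm y z.
Proof. by case: H. Qed.
Lemma jmC x y : jm x y = jm y x.
Proof. by case: H => _ []. Qed.
Lemma jmel x : jm e x = x.
Proof. by case: H => _ [_ [_ []]]. Qed.
Lemma jmer x : jm x e = x.
Proof. by rewrite jmC jmel. Qed.
Lemma jm_norm x y : `|jm x y| <= `|x| * `|y|.
Proof. by case: H => _ [_ [_ [_ []]]]. Qed.
Lemma jmDl x y z : jm (x + y) z = jm x z + jm y z.
Proof. by rewrite -[x]scale1r jmlin !scale1r. Qed.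
Lemma jm0l z : jm 0 z = 0.
Proof. by have := jmDl 0 0 z; rewrite addr0 => /eqP; rewrite -subr_eq subrr eq_sym => /eqP. Qed.
Lemma jmZl a x z : jm (a *: x) z = a *: jm x z.
Proof. by rewrite -[a *: x]addr0 jmlin jm0l addr0. Qed.
Lemma jmNl x z : jm (- x) z = - jm x z.
Proof. by rewrite -scaleN1r jmZl scaleN1r. Qed.
Lemma jmNr x z : jm z (- x) = - jm z x.
Proof. by rewrite !(jmC z) jmNl. Qed.
Lemma jmBl x y z : jm (x - y) z = jm x z - jm y z.
Proof. by rewrite jmDl jmNl. Qed.
Lemma jmDr x y z : jm z (x + y) = jm z x + jm z y.
Proof. by rewrite !(jmC z) jmDl. Qed.
Lemma jmZr a x z : jm z (a *: x) = a *: jm z x.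
Proof. by rewrite !(jmC z) jmZl. Qed.
Lemma jmBr x y z : jm z (x - y) = jm z x - jm z y.
Proof. by rewrite !(jmC z) jmBl. Qed.
Lemma jm0r z : jm z 0 = 0.
Proof. by rewrite jmC jm0l. Qed.

Lemma jm_sqD x y : jm (x + y) (x + y) = jm x x + 2 *: jm x y + jm y y.
Proof. by rewrite jmDl !jmDr (jmC y x) scaler_nat mulr2n !addrA. Qed.

Lemma jm_polar x y : jm x y = 2^-1 *: (jm (x + y) (x + y) - jm x x - jm y y).
Proof.
rewrite jm_sqD; set a := jm x x; set b := jm y y; set s := jm x y.
have -> : a + 2 *: s + b - a - b = 2 *: s.
  by rewrite addrAC addrK [a + _]addrC addrK.
by rewrite scalerA mulVf ?scale1r // pnatr_eq0.
Qed.
End Alg.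
Section Sqrt.
Variables (R : realType) (V : completeNormedModType R) (jm : V -> V -> V) (e : V).
Hypothesis H : unital_JB_algebra jm e.

Lemma sq_diff a b : jm a a - jm b b = jm (a - b) (a + b).
Proof.
rewrite (jmBl H) !(jmDr H) (jmC H b a).
by rewrite opprD addrA addrK.
Qed.

Lemma sqrt_exists x : `|x| <= 2^-1 -> exists y, jm y y = e - x.
Proof.
move=> hx.
pose U := [set z : V | `|z| <= 2^-1].
pose T := fun z : V => 2^-1 *: (x + jm z z).
have TS : {homo T : z / U z >-> U z}.
  move=> z; rewrite /U /T /= => hz.
  rewrite normrZ ger0_norm ?invr_ge0 ?ler0n //.
  have h1 := jm_norm H z z.
  have h2 : `|x + jm z z| <= `|x| + `|z| * `|z| by apply: le_trans (ler_normD _ _) _; rewrite lerD.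
  have h3 : `|z| * `|z| <= 2^-1 * 2^-1 by apply: ler_pM.
  have h4 : `|x + jm z z| <= 1.
    apply: (le_trans h2); apply: le_trans (lerD hx h3) _.
    lra.
  lra.
pose Tf : {fun U >-> U} := HB.pack T (isFun.Build _ _ U U T TS).
have ctr : is_contraction Tf.
  exists (2^-1)%:nng; split; first by rewrite /=; lra.
  move=> [a b] [/= Ua Ub] /=.
  rewrite /T -scalerBr normrZ ger0_norm ?invr_ge0 ?ler0n //.
  rewrite opprD addrA (addrC x) addrK.
  rewrite -/(jm a a) sq_diff.
  have := jm_norm H (a - b) (a + b).
  have : `|a + b| <= 1 by apply: le_trans (ler_normD _ _) _; move: Ua Ub; rewrite /U /=; lra.
  move=> hab hn.
  have : `|a - b| * `|a + b| <= `|a - b| by rewrite -[X in _ <= X]mulr1 ler_wpM2l.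
  rewrite /=; lra.
have Ucl : closed U.
  have -> : U = closed_ball (0:V) 2^-1.
    rewrite closed_ballE ?invr_gt0 ?ltr0n //; apply/seteqP; split => z;
    by rewrite /U /closed_ball_ /= sub0r normrN.
  exact: closed_ball_closed.
have U0 : U !=set0 by exists 0; rewrite /U /= normr0 invr_ge0 ler0n.
have [p Up fp] := banach_fixed_point ctr Ucl U0.
exists (e - p).
have hpp : jm p p = p + p - x.
  have : 2 *: p = x + jm p p.
    by rewrite [in LHS]fp /= /T scalerA mulfV ?scale1r // pnatr_eq0.
  by rewrite scaler_nat mulr2n => ->; rewrite [x + _]addrC addrK.
rewrite (jmBl H) !(jmBr H) !(jmel H) (jmer H) hpp opprB.
by rewrite (addrAC p) addrK addrA subrK.
Qed.
End Sqrt.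
Section States.
Variables (R : realType) (V : completeNormedModType R) (jm : V -> V -> V) (e : V).
Hypothesis H : unital_JB_algebra jm e.
Variable s : V -> R.
Hypothesis hs : is_state jm e s.

Lemma s_lin a x y : s (a *: x + y) = a * s x + s y.
Proof. by case: hs. Qed.
Lemma s_sq x : 0 <= s (jm x x).
Proof. by case: hs. Qed.
Lemma s_e : s e = 1.
Proof. by case: hs. Qed.
Lemma sD x y : s (x + y) = s x + s y.
Proof. by rewrite -[x]scale1r s_lin mul1r scale1r. Qed.
Lemma s0 : s 0 = 0.
Proof. by have := sD 0 0; rewrite addr0 => /eqP; rewrite -subr_eq subrr eq_sym => /eqP. Qed.
Lemma sZ a x : s (a *: x) = a * s x.
Proof. by rewrite -[a *: x]addr0 s_lin s0 addr0. Qed.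
Lemma sN x : s (- x) = - s x.
Proof. by rewrite -scaleN1r sZ mulN1r. Qed.
Lemma sB x y : s (x - y) = s x - s y.
Proof. by rewrite sD sN. Qed.

Lemma s_le1 y : `|y| <= 2^-1 -> s y <= 1.
Proof.
move=> /(sqrt_exists H) [z hz]; have := s_sq z; rewrite hz sB s_e; lra.
Qed.

Lemma s_bound x : `|s x| <= 2 * `|x|.
Proof.
have [->|x0] := eqVneq x 0; first by rewrite s0 !normr0 mulr0.
have nx : 0 < `|x| by rewrite normr_gt0.
set c := (2 * `|x|)^-1.
have c0 : 0 < c by rewrite invr_gt0 mulr_gt0.
have ny : `|c *: x| <= 2^-1.
  by rewrite normrZ gtr0_norm // /c invfM -mulrA mulVf ?mulr1 ?gt_eqF.
have ny' : `|c *: - x| <= 2^-1 by rewrite normrZ normrN -normrZ.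
have h1 : s (c *: x) <= 1 by apply: s_le1.
have h2 : s (c *: - x) <= 1 by apply: s_le1.
rewrite sZ in h1; rewrite sZ sN in h2.
have : c * `|s x| <= 1.
  by case: (ler0P (s x)) => hsx.
by rewrite -ler_pdivlMl // /c invrK mulr1.
Qed.
End States.
Section Poly.
Variables (R : realType) (V : completeNormedModType R) (jm : V -> V -> V) (e : V).
Hypothesis H : unital_JB_algebra jm e.

Lemma jpeval4 (a0 a1 a2 a3 : R) c :
  jpeval jm e (Poly [:: a0; a1; a2; a3]) c =
  a0 *: e + a1 *: c + a2 *: jm c c + a3 *: jm c (jm c c).
Proof.
rewrite /jpeval (big_ord_widen 4 (fun i => (Poly [:: a0; a1; a2; a3])`_i *: jpow jm e c i)); last exact: size_Poly.
rewrite big_mkcond /=.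
rewrite (eq_bigr (fun i : 'I_4 => (Poly [:: a0; a1; a2; a3])`_i *: jpow jm e c i)); last first.
  move=> i _; case: ifP => // /negbT; rewrite -leqNgt => hi.
  by rewrite nth_default // scale0r.
rewrite !big_ord_recr big_ord0 !coef_Poly /= add0r.
by rewrite !(jmer H).
Qed.

Lemma fcalc_poly c (p : {poly R}) : fcalc jm e c (horner p) (jpeval jm e p c).
Proof.
exists (fun _ => p); split; last exact: cvg_cst.
by move=> eps he; apply: nearW => n t _; rewrite subrr normr0.
Qed.
End Poly.
Unset Implicit Arguments.
Section Main.
Variables (R : realType) (V : completeNormedModType R) (jm : V -> V -> V) (e : V) (C : set V).
Hypothesis H : unital_JB_algebra jm e.
Hypothesis hf : forall (c : V) (f : R -> R) (x : V), C c -> continuous f ->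
     {homo f : s t / s <= t} -> fcalc jm e c f x -> C x.
Hypothesis hadd : forall c1 c2, C c1 -> C c2 -> C (c1 + c2).

Definition lc (a0 a1 a2 a3 : R) (u0 u1 u2 u3 : V) :=
  a0 *: u0 + a1 *: u1 + a2 *: u2 + a3 *: u3.
Lemma lcB a0 a1 a2 a3 b0 b1 b2 b3 u0 u1 u2 u3 :
  lc a0 a1 a2 a3 u0 u1 u2 u3 - lc b0 b1 b2 b3 u0 u1 u2 u3 =
  lc (a0 - b0) (a1 - b1) (a2 - b2) (a3 - b3) u0 u1 u2 u3.
Proof.
have D2 : forall x y z w : V, (x + y) - (z + w) = (x - z) + (y - w).
  by move=> x y z w; rewrite opprD addrACA.
by rewrite /lc !D2 -!scalerBl.
Qed.
Lemma lcZ k a0 a1 a2 a3 u0 u1 u2 u3 :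
  k *: lc a0 a1 a2 a3 u0 u1 u2 u3 = lc (k * a0) (k * a1) (k * a2) (k * a3) u0 u1 u2 u3.
Proof. by rewrite /lc !scalerDr !scalerA. Qed.

Lemma horner4 (a0 a1 a2 a3 t : R) :
  (Poly [:: a0; a1; a2; a3]).[t] = a0 + a1 * t + a2 * t ^+ 2 + a3 * t ^+ 3.
Proof. rewrite horner_Poly /=; ring. Qed.

Lemma inC4 c (a0 a1 a2 a3 : R) : C c ->
  (forall s t : R, s <= t -> a0 + a1 * s + a2 * s ^+ 2 + a3 * s ^+ 3 <=
                              a0 + a1 * t + a2 * t ^+ 2 + a3 * t ^+ 3) ->
  C (a0 *: e + a1 *: c + a2 *: jm c c + a3 *: jm c (jm c c)).
Proof.
move=> Cc hmon; rewrite -(jpeval4 H).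
have hc : continuous (horner (Poly [:: a0; a1; a2; a3])).
  by move=> x; apply: continuous_horner.
apply: (hf _ _ _ Cc hc); last exact: fcalc_poly.
by move=> s t st; rewrite !horner4; apply: hmon.
Qed.

Lemma C_scale c a : C c -> 0 <= a -> C (a *: c).
Proof.
move=> Cc a0; have := @inC4 c 0 a 0 0 Cc.
rewrite !scale0r add0r !addr0; apply => s t st; rewrite !mul0r !addr0 !add0r.
exact: ler_wpM2l.
Qed.

Lemma C_shift c k : C c -> C (c + k *: e).
Proof.
move=> Cc; have := @inC4 c k 1 0 0 Cc.
rewrite !scale0r !addr0 scale1r addrC; apply => s t st; rewrite !mul0r !addr0 !mul1r.
by rewrite lerD2l.
Qed.

Lemma C_sq c : C c -> exists P1 P2, C P1 /\ C P2 /\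
  jm c c = 6^-1 *: P1 - 6^-1 *: P2 - 3^-1 *: e.
Proof.
move=> Cc.
have h1 := @inC4 c 1 3 3 1 Cc.
have h2 := @inC4 c (-1) 3 (-3) 1 Cc.
have m1 : forall s t : R, s <= t -> 1 + 3 * s + 3 * s ^+ 2 + 1 * s ^+ 3 <=
                              1 + 3 * t + 3 * t ^+ 2 + 1 * t ^+ 3.
  move=> s t st; rewrite -subr_ge0.
  have -> : 1 + 3 * t + 3 * t ^+ 2 + 1 * t ^+ 3 - (1 + 3 * s + 3 * s ^+ 2 + 1 * s ^+ 3)
     = (t - s) * (((t + 1) + 2^-1 * (s + 1)) ^+ 2 + 3 / 4 * (s + 1) ^+ 2) by field.
  apply: mulr_ge0; first by rewrite subr_ge0.
  by apply: addr_ge0; [exact: sqr_ge0| apply: mulr_ge0 => //; exact: sqr_ge0].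
have m2 : forall s t : R, s <= t -> -1 + 3 * s + -3 * s ^+ 2 + 1 * s ^+ 3 <=
                              -1 + 3 * t + -3 * t ^+ 2 + 1 * t ^+ 3.
  move=> s t st; rewrite -subr_ge0.
  have -> : -1 + 3 * t + -3 * t ^+ 2 + 1 * t ^+ 3 - (-1 + 3 * s + -3 * s ^+ 2 + 1 * s ^+ 3)
     = (t - s) * (((t - 1) + 2^-1 * (s - 1)) ^+ 2 + 3 / 4 * (s - 1) ^+ 2) by field.
  apply: mulr_ge0; first by rewrite subr_ge0.
  by apply: addr_ge0; [exact: sqr_ge0| apply: mulr_ge0 => //; exact: sqr_ge0].
eexists; eexists; split; first exact: h1 m1.
split; first exact: h2 m2.
set c3 := jm c (jm c c).
have E1 : jm c c = lc 0 0 1 0 e c (jm c c) c3.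
  by rewrite /lc !scale0r scale1r !add0r addr0.
have E2 : 3^-1 *: e = lc 3^-1 0 0 0 e c (jm c c) c3.
  by rewrite /lc !scale0r !addr0.
change (jm c c = 6^-1 *: lc 1 3 3 1 e c (jm c c) c3 - 6^-1 *: lc (-1) 3 (-3) 1 e c (jm c c) c3 - 3^-1 *: e).
rewrite E2 !lcZ !lcB.
by rewrite [LHS]E1; congr lc; field.
Qed.

Definition Cz u := C u \/ exists k : R, 0 <= k /\ u = k *: e.
Definition D x := exists u v, Cz u /\ Cz v /\ x = u - v.

Lemma Cz_add u v : Cz u -> Cz v -> Cz (u + v).
Proof.
case=> [Cu|[k [k0 ->]]] [Cv|[l [l0 ->]]].
- by left; apply: hadd.
- by left; apply: C_shift.
- by left; rewrite addrC; apply: C_shift.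
- by right; exists (k + l); rewrite scalerDl addr_ge0.
Qed.

Lemma Cz_scale u a : 0 <= a -> Cz u -> Cz (a *: u).
Proof.
move=> a0 [Cu|[k [k0 ->]]]; first by left; apply: C_scale.
by right; exists (a * k); rewrite scalerA mulr_ge0.
Qed.

Lemma Cz0 : Cz 0.
Proof. by right; exists 0; rewrite scale0r lexx. Qed.

Lemma D_lin a x y : D x -> D y -> D (a *: x + y).
Proof.
have D2 : forall x y z w : V, (x - y) + (z - w) = (x + z) - (y + w).
  by move=> x' y' z' w'; rewrite opprD addrACA.
move=> [u1 [v1 [Cu1 [Cv1 ->]]]] [u2 [v2 [Cu2 [Cv2 ->]]]].
have [a0|a0] := leP 0 a.
  exists (a *: u1 + u2), (a *: v1 + v2); split; first by apply: Cz_add => //; apply: Cz_scale.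
  split; first by apply: Cz_add => //; apply: Cz_scale.
  by rewrite scalerBr D2.
exists ((- a) *: v1 + u2), ((- a) *: u1 + v2).
have na : 0 <= - a by rewrite oppr_ge0 ltW.
split; first by apply: Cz_add => //; apply: Cz_scale.
split; first by apply: Cz_add => //; apply: Cz_scale.
by rewrite -D2 -scalerBr scaleNr -scalerN opprB.
Qed.

Lemma D_Cz u : Cz u -> D u.
Proof. by move=> Cu; exists u, 0; split => //; split; [exact: Cz0|rewrite subr0]. Qed.
Lemma D0 : D 0.
Proof. exact: D_Cz Cz0. Qed.
Lemma De : D e.
Proof. by apply: D_Cz; right; exists 1; rewrite scale1r ler01. Qed.
Lemma DD x y : D x -> D y -> D (x + y).
Proof. by move=> Dx Dy; rewrite -[x]scale1r; apply: D_lin. Qed.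
Lemma DZ a x : D x -> D (a *: x).
Proof. by move=> Dx; rewrite -[a *: x]addr0; apply: D_lin => //; exact: D0. Qed.
Lemma DN x : D x -> D (- x).
Proof. by move=> Dx; rewrite -scaleN1r; apply: DZ. Qed.
Lemma DB x y : D x -> D y -> D (x - y).
Proof. by move=> Dx Dy; apply: DD => //; apply: DN. Qed.

Lemma D_sqCz u : Cz u -> D (jm u u).
Proof.
case=> [Cu|[k [k0 ->]]].
  have [P1 [P2 [C1 [C2 ->]]]] := C_sq _ Cu.
  by apply: DB; [apply: DB|]; apply: DZ => //; [apply: D_Cz; left..|exact: De].
rewrite (jmZl H) (jmZr H) (jmel H) scalerA; apply: D_Cz; right.
by exists (k * k); rewrite mulr_ge0.
Qed.

Lemma D_prodCz u v : Cz u -> Cz v -> D (jm u v).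
Proof.
move=> Cu Cv; rewrite (jm_polar H); apply: DZ.
by apply: DB; [apply: DB|]; apply: D_sqCz => //; apply: Cz_add.
Qed.

Lemma D_sq x : D x -> D (jm x x).
Proof.
move=> [u [v [Cu [Cv ->]]]].
rewrite (jm_sqD H) (jmNr H) (jmNl H) (jmNr H) opprK.
by apply: DD; [apply: DD; [exact: D_sqCz|apply: DZ; apply: DN; exact: D_prodCz]|exact: D_sqCz].
Qed.

Lemma D_prod x y : D x -> D y -> D (jm x y).
Proof.
move=> Dx Dy; rewrite (jm_polar H); apply: DZ.
by apply: DB; [apply: DB|]; apply: D_sq => //; apply: DD.
Qed.

Definition B x := forall eps : R, 0 < eps -> exists d, D d /\ `|x - d| < eps.

Lemma D_B x : D x -> B x.
Proof. by move=> Dx eps he; exists x; rewrite subrr normr0. Qed.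

Lemma B_lin a x y : B x -> B y -> B (a *: x + y).
Proof.
move=> Bx By eps he.
have a1 : 0 < `|a| + 1 by rewrite ltr_pwDr // normr_ge0.
have [d1 [D1 h1]] := Bx (eps / (`|a| + 1)) (divr_gt0 he a1).
have [d2 [D2 h2]] := By (eps / (`|a| + 1)) (divr_gt0 he a1).
exists (a *: d1 + d2); split; first exact: D_lin.
rewrite opprD addrACA -scalerBr.
apply: le_lt_trans (ler_normD _ _) _; rewrite normrZ.
have h3 : `|a| * `|x - d1| <= `|a| * (eps / (`|a| + 1)).
  by rewrite ler_wpM2l // ltW.
have -> : eps = `|a| * (eps / (`|a| + 1)) + eps / (`|a| + 1).
  by field; rewrite gt_eqF.
by apply: ler_ltD.
Qed.

Lemma B_prod x y : B x -> B y -> B (jm x y).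
Proof.
move=> Bx By eps he.
set M := `|x| + `|y| + 2.
have M0 : 0 < M by rewrite /M; have := normr_ge0 x; have := normr_ge0 y; lra.
set dl := Num.min 1 (eps / M).
have dl0 : 0 < dl by rewrite /dl lt_min ltr01 divr_gt0.
have dl1 : dl <= 1 by rewrite /dl ge_min lexx.
have dlM : dl * M <= eps.
  by rewrite -ler_pdivlMr // /dl ge_min lexx orbT.
have [d1 [D1 h1]] := Bx dl dl0.
have [d2 [D2 h2]] := By dl dl0.
exists (jm d1 d2); split; first exact: D_prod.
have -> : jm x y - jm d1 d2 = jm (x - d1) y + jm d1 (y - d2).
  by rewrite (jmBl H) (jmBr H) addrA subrK.
apply: le_lt_trans (ler_normD _ _) _.
have n1 := jm_norm H (x - d1) y.
have n2 := jm_norm H d1 (y - d2).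
have nd1 : `|d1| <= `|x| + 1.
  have := ler_distD x 0 d1; rewrite !sub0r !normrN => hh.
  lra.
have t1 : `|x - d1| * `|y| <= dl * `|y| by rewrite ler_wpM2r // ltW.
have t2 : `|d1| * `|y - d2| <= (`|x| + 1) * dl.
  by apply: ler_pM; [exact: normr_ge0|exact: normr_ge0|exact: nd1|exact: ltW].
rewrite /M in dlM.
have := normr_ge0 x; have := normr_ge0 y.
nra.
Qed.

Lemma B_closed : closed B.
Proof.
move=> x clx eps he.
have he2 : 0 < eps / 2 by rewrite divr_gt0.
have [y [By bxy]] := clx _ (nbhsx_ballx x (eps / 2) he2).
move: bxy; rewrite -ball_normE /ball_ /= => bxy.
have [d [Dd hd]] := By _ he2.
exists d; split => //.
apply: le_lt_trans (ler_distD y x d) _.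
lra.
Qed.

Lemma B_agree s1 s2 : is_state jm e s1 -> is_state jm e s2 ->
  (forall c, C c -> s1 c = s2 c) -> forall x, B x -> s1 x = s2 x.
Proof.
move=> h1 h2 hC.
have hCz : forall u, Cz u -> s1 u = s2 u.
  move=> u [Cu|[k [_ ->]]]; first exact: hC.
  by rewrite (sZ h1) (sZ h2) (s_e h1) (s_e h2).
have hD : forall u, D u -> s1 u = s2 u.
  by move=> u [u' [v' [Cu [Cv ->]]]]; rewrite (sB h1) (sB h2) !hCz.
move=> x Bx.
apply/eqP; rewrite -subr_eq0 -normr_eq0; apply/eqP.
apply/le_anti; rewrite normr_ge0 andbT.
apply/ler_addgt0Pr => eps he.
rewrite add0r.
have he4 : 0 < eps / 4 by rewrite divr_gt0.
have [d [Dd hd]] := Bx _ he4.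
have -> : s1 x - s2 x = s1 (x - d) - s2 (x - d).
  rewrite (sB h1) (sB h2) (hD d Dd); ring.
apply: le_trans (ler_normB _ _) _.
have := s_bound H h1 (x - d); have := s_bound H h2 (x - d).
lra.
Qed.

Lemma main_sep : strong_stone_weierstrass jm e ->
  separates C (is_pure_state jm e) -> separates C (is_state jm e).
Proof.
move=> hss hpure s1 s2 h1 h2 ne.
apply: contrapT => hno.
have hC : forall c, C c -> s1 c = s2 c.
  move=> c Cc; apply: contrapT => hne; apply: hno; by exists c.
have BT : B = setT.
  apply: hss; first split.
  - exact: D_B D0.
  - by move=> a x y; apply: B_lin.
  - by move=> x y; apply: B_prod.
  - exact: B_closed.
  move=> phi psi [hphi|->] [hpsi|->] hne.
  - have [b [Cb hb]] := hpure phi psi hphi hpsi hne.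
    by exists b; split => //; apply: D_B; apply: D_Cz; left.
  - exists e; split; first exact: D_B De.
    by rewrite (s_e hphi.1); apply/eqP; rewrite oner_eq0.
  - exists e; split; first exact: D_B De.
    by rewrite (s_e hpsi.1); apply/eqP; rewrite eq_sym oner_eq0.
  - by case: hne.
apply: ne; apply: funext => x; apply: (B_agree s1 s2 h1 h2 hC x).
by rewrite BT.
Qed.
End Main.
Unset Implicit Arguments.
Theorem mainTheorem1 (R : realType) (V : completeNormedModType R)
  (jm : V -> V -> V) (e : V) (C : set V) :
  unital_JB_algebra jm e ->
  strong_stone_weierstrass jm e ->
  separates C (is_pure_state jm e) ->
  (forall (c : V) (f : R -> R) (x : V), C c -> continuous f ->
     {homo f : s t / s <= t} -> fcalc jm e c f x -> C x) ->
  closed C ->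
  (forall c1 c2, C c1 -> C c2 -> C (c1 + c2)) ->
  separates C (is_state jm e).
Proof.
move=> H hss hpure hf _ hadd.
exact: (main_sep R V jm e C H hf hadd hss hpure).
Qed.
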